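(* Under the standing assumptions in the context, with $h^E$, $h^S$ defined as there, let $$h^Q(r)=\frac{q_w}{r\sqrt{2\eta(r)}},\qquad L(r)=\frac{1}{3\nu(r)\left(\dfrac{2\eta(r)}{3g\,\nu(r)}-h^Q(r)\right)}.$$ Then $L(r)>0$ and $$h^S(r)-h^E(r)\ \ge\ L(r)\,\big(h^S(r)\big)^2\,\big(1-\nu(r)\big)\qquad\text{for all } r\in[r_0,r_1].$$
   Context: Standing assumptions and notation. Let $g>0$, $0<r_0<r_1$, and let $f\in C^1([r_0,r_1])$ with $f'(r)\le 0$ for all $r\in[r_0,r_1]$, $f'(r_0)=0$, and $f(r_0)>f(r_1)$. Set $\nu(r)=1/\sqrt{1+(f'(r))^2}$. Let $h_0>0$, $u_0>0$ with $u_0^2/(g h_0)>1$. Define $q_e=\tfrac12 u_0^2+g\,(f(r_0)+h_0)$, $q_w=r_0h_0u_0$, $\eta(r)=q_e-g f(r)$ (note $\eta(r)>0$ on $[r_0,r_1]$), and $$\mathcal P^S_r(h)=g h^3-\eta(r)h^2+\frac{q_w^2}{2r^2},\qquad \mathcal P^E_r(h)=g\,\nu(r)\, h^3-\eta(r)h^2+\frac{q_w^2}{2r^2}.$$ Let $\nu^S(r)=1$, $\nu^E(r)=\nu(r)$, $h^M_\star(r)=\dfrac{2\eta(r)}{3g\,\nu^M(r)}$ for $M\in\{E,S\}$. For each $r\in[r_0,r_1]$ and $M\in\{E,S\}$, $h^M(r)$ denotes the unique root of $\mathcal P^M_r$ in the interval $(0,h^M_\star(r))$ (this root exists and $h^M$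 is continuous with $h^M(r_0)=h_0$). *)

(* Defs.v *)
From Stdlib Require Import Reals Lra.
Open Scope R_scope.

Definition deriv_on (f f' : R -> R) (a b : R) : Prop :=
  forall x, a <= x <= b -> forall eps, 0 < eps -> exists delta, 0 < delta /\
    forall y, a <= y <= b -> Rabs (y - x) < delta ->
      Rabs (f y - f x - f' x * (y - x)) <= eps * Rabs (y - x).

Definition cont_on (h : R -> R) (a b : R) : Prop :=
  forall x, a <= x <= b -> forall eps, 0 < eps -> exists delta, 0 < delta /\
    forall y, a <= y <= b -> Rabs (y - x) < delta -> Rabs (h y - h x) < eps.

Definition C1_on (f f' : R -> R) (a b : R) : Prop :=
  deriv_on f f' a b /\ cont_on f' a b.

Definition nu (f' : R -> R) (r : R) : R := 1 / sqrt (1 + (f' r) ^ 2).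

Definition q_e (g : R) (f : R -> R) (r0 h0 u0 : R) : R :=
  1 / 2 * u0 ^ 2 + g * (f r0 + h0).

Definition q_w (r0 h0 u0 : R) : R := r0 * h0 * u0.

Definition eta (g : R) (f : R -> R) (r0 h0 u0 r : R) : R :=
  q_e g f r0 h0 u0 - g * f r.

(* P_r^M(h) = g nu^M(r) h^3 - eta(r) h^2 + q_w^2/(2 r^2);  nu^S = 1, nu^E = nu *)
Definition polyM (g nuM etar qw r h : R) : R :=
  g * nuM * h ^ 3 - etar * h ^ 2 + qw ^ 2 / (2 * r ^ 2).

Definition hstar (g nuM etar : R) : R := 2 * etar / (3 * g * nuM).

Definition hQ (qw etar r : R) : R := qw / (r * sqrt (2 * etar)).

Definition Lfun (g nur etar qw r : R) : R :=
  1 / (3 * nur * (2 * etar / (3 * g * nur) - hQ qw etar r)).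

(* Main.v *)
Require Import Defs.
From Stdlib Require Import Reals Lra Psatz.
Open Scope R_scope.

Lemma key (g nu eta a hQ hS hE : R) :
  0 < g -> 0 < nu -> nu <= 1 -> 0 < a -> 0 < hQ -> hQ^2 * eta = a ->
  0 < hS -> 3 * g * hS < 2 * eta -> g * hS^3 - eta * hS^2 + a = 0 ->
  0 < hE -> 3 * g * nu * hE < 2 * eta -> g * nu * hE^3 - eta * hE^2 + a = 0 ->
  0 < 2 * eta - 3 * g * nu * hQ /\
  (hS - hE) * (2 * eta - 3 * g * nu * hQ) >= g * hS^2 * (1 - nu).
Proof.
  intros Hg Hn Hn1 Ha HQ HQe HS HS1 HS2 HE HE1 HE2.
  assert (Heta : 0 < eta) by (assert (0 < g*hS) by (apply Rmult_lt_0_compat; lra); lra).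
  assert (HEQ : hQ < hE).
  { assert (0 < g*nu*hE^3) by (apply Rmult_lt_0_compat; [nra| apply pow_lt; lra]).
    assert (eta * hE^2 > eta * hQ^2) by nra.
    assert (hE^2 > hQ^2) by nra. nra. }
  assert (HS1' : 3 * g * nu * hS < 2 * eta) by nra.
  set (D := eta * (hS + hE) - g * nu * (hS^2 + hS*hE + hE^2)).
  assert (HD : 0 < D).
  { unfold D. assert (hS*hE <= (hS^2+hE^2)/2) by (assert (0 <= (hS-hE)*(hS-hE)) by apply Rle_0_sqr; simpl; lra).
    assert (3*g*nu*hS*hS < 2*eta*hS) by (apply Rmult_lt_compat_r; lra).
    assert (3*g*nu*hE*hE < 2*eta*hE) by (apply Rmult_lt_compat_r; lra).
    assert (0 < g*nu) by (apply Rmult_lt_0_compat; lra).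
    assert (g*nu*(hS*hE) <= g*nu*((hS^2+hE^2)/2)) by (apply Rmult_le_compat_l; lra).
    simpl in *. nra. }
  assert (Hid : (hS - hE) * D = g * (1 - nu) * hS^3) by (unfold D; nra).
  assert (Hgn : 0 < g*nu) by (apply Rmult_lt_0_compat; lra).
  assert (HSE : hE <= hS).
  { destruct (Rle_lt_dec hE hS); auto.
    assert (g * (1-nu) * hS^3 >= 0).
    { apply Rle_ge. apply Rmult_le_pos; [apply Rmult_le_pos; lra|]. apply pow_le; lra. }
    assert (0 < (hE-hS)*D) by (apply Rmult_lt_0_compat; lra).
    lra. }
  assert (Hqe : g*nu*hQ < g*nu*hE) by (apply Rmult_lt_compat_l; lra).
  split. { lra. }
  assert (HK : hS * (2 * eta - 3 * g * nu * hQ) >= D).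
  { unfold D.
    assert (P1 : 0 <= (g*nu*hE)*(hE-hQ)) by (apply Rmult_le_pos; nra).
    assert (P2 : 0 <= (g*nu*hS)*(hS-hQ)) by (apply Rmult_le_pos; nra).
    assert (P3 : 0 <= (g*nu*hS)*(hE-hQ)) by (apply Rmult_le_pos; nra).
    assert (P4 : 0 <= (eta - g*nu*hQ)*(hS-hE)) by (apply Rmult_le_pos; lra).
    simpl. ring_simplify in P1. ring_simplify in P2. ring_simplify in P3. ring_simplify in P4.
    ring_simplify. lra. }
  assert (0 <= hS - hE) by lra.
  set (K := 2 * eta - 3 * g * nu * hQ) in *.
  assert (Q : (hS - hE) * (hS * K) >= (hS-hE)*D) by (apply Rle_ge, Rmult_le_compat_l; lra).
  rewrite Hid in Q.
  assert (Q2 : hS * ((hS - hE) * K - g * hS^2 * (1 - nu)) >= 0) by (simpl in *; lra).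
  destruct (Rlt_le_dec ((hS - hE) * K - g * hS^2 * (1 - nu)) 0) as [Hc|Hc]; [|lra].
  assert (0 < hS * (-((hS - hE) * K - g * hS^2 * (1 - nu)))) by (apply Rmult_lt_0_compat; lra).
  lra.
Qed.

Theorem proposition1
  (g r0 r1 h0 u0 : R) (f f' : R -> R) (hS hE : R -> R)
  (Hg : 0 < g) (Hr0 : 0 < r0) (Hr01 : r0 < r1)
  (Hf : C1_on f f' r0 r1)
  (Hf'le : forall r, r0 <= r <= r1 -> f' r <= 0)
  (Hf'0 : f' r0 = 0)
  (Hf01 : f r0 > f r1)
  (Hh0 : 0 < h0) (Hu0 : 0 < u0)
  (HFr : u0 ^ 2 / (g * h0) > 1)
  (HhS : forall r, r0 <= r <= r1 ->
     0 < hS r < hstar g 1 (eta g f r0 h0 u0 r) /\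
     polyM g 1 (eta g f r0 h0 u0 r) (q_w r0 h0 u0) r (hS r) = 0)
  (HhE : forall r, r0 <= r <= r1 ->
     0 < hE r < hstar g (nu f' r) (eta g f r0 h0 u0 r) /\
     polyM g (nu f' r) (eta g f r0 h0 u0 r) (q_w r0 h0 u0) r (hE r) = 0) :
  forall r, r0 <= r <= r1 ->
    0 < Lfun g (nu f' r) (eta g f r0 h0 u0 r) (q_w r0 h0 u0) r /\
    hS r - hE r >=
      Lfun g (nu f' r) (eta g f r0 h0 u0 r) (q_w r0 h0 u0) r
        * (hS r) ^ 2 * (1 - nu f' r).
Proof.
  intros r Hr.
  destruct (HhS r Hr) as [[S1 S2] S3].
  destruct (HhE r Hr) as [[E1 E2] E3].
  unfold Lfun, hstar, polyM in *.
  set (n := nu f' r) in *.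
  set (et := eta g f r0 h0 u0 r) in *.
  set (qw := q_w r0 h0 u0) in *.
  set (s := hS r) in *. set (e := hE r) in *.
  assert (Hqw : 0 < qw) by (unfold qw, q_w; apply Rmult_lt_0_compat; nra).
  assert (Hrp : 0 < r) by lra.
  assert (Hsq : 1 <= sqrt (1 + f' r ^ 2)).
  { rewrite <- sqrt_1 at 1. apply sqrt_le_1_alt. assert (0 <= f' r ^ 2) by apply pow2_ge_0. lra. }
  assert (Hn : 0 < n /\ n <= 1).
  { unfold n, nu. split.
    - apply Rdiv_lt_0_compat; lra.
    - apply (Rmult_le_reg_r (sqrt (1 + f' r ^ 2))); [lra|].
      unfold Rdiv. rewrite Rmult_assoc, Rinv_l by lra. lra. }
  destruct Hn as [Hn Hn1].
  assert (Het : 0 < et).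
  { assert (0 < 2 * et / (3 * g * 1)) by lra.
    assert (0 < 2 * et) by (apply (Rmult_lt_reg_r (/ (3*g*1))); [apply Rinv_0_lt_compat; nra| ]; rewrite Rmult_0_l; exact H).
    lra. }
  assert (S2' : 3 * g * s < 2 * et).
  { apply (Rmult_lt_compat_l (3*g*1)) in S2; [|nra].
    unfold Rdiv in S2. rewrite (Rmult_comm (2*et)), <- Rmult_assoc, Rinv_r in S2 by nra. lra. }
  assert (E2' : 3 * g * n * e < 2 * et).
  { apply (Rmult_lt_compat_l (3*g*n)) in E2; [|nra].
    unfold Rdiv in E2. rewrite (Rmult_comm (2*et)), <- Rmult_assoc, Rinv_r in E2 by nra. lra. }
  set (a := qw ^ 2 / (2 * r ^ 2)) in *.
  assert (Ha : 0 < a) by (unfold a; apply Rdiv_lt_0_compat; nra).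
  set (hq := hQ qw et r).
  assert (Hsq2 : 0 < sqrt (2 * et)) by (apply sqrt_lt_R0; lra).
  assert (Hhq : 0 < hq) by (unfold hq, hQ; apply Rdiv_lt_0_compat; nra).
  assert (Hhqe : hq ^ 2 * et = a).
  { unfold hq, hQ, a. unfold Rdiv.
    rewrite Rpow_mult_distr, pow_inv, Rpow_mult_distr.
    replace (sqrt (2 * et) ^ 2) with (2 * et) by (simpl; rewrite Rmult_1_r, sqrt_sqrt; lra).
    field. split; lra. }
  destruct (key g n et a hq s e Hg Hn Hn1 Ha Hhq Hhqe S1 S2' ltac:(lra) E1 E2' ltac:(lra))
    as [K1 K2].
  assert (HL : 1 / (3 * n * (2 * et / (3 * g * n) - hq)) = g / (2 * et - 3 * g * n * hq)).
  { replace (3 * n * (2 * et / (3 * g * n) - hq)) with ((2 * et - 3 * g * n * hq) / g) by (field; lra).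
    field. lra. }
  fold hq. rewrite HL. split.
  - apply Rdiv_lt_0_compat; lra.
  - apply Rle_ge.
    apply (Rmult_le_reg_r (2 * et - 3 * g * n * hq)); [lra|].
    replace (g / (2 * et - 3 * g * n * hq) * s ^ 2 * (1 - n) * (2 * et - 3 * g * n * hq))
      with (g * s^2 * (1-n)) by (field; lra).
    lra.
Qed.
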